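(* Let $K$ be a field, $V$ a $K$-vector space, and $(V_x)_{x\in E}$ a family of subspaces of $V$ indexed by a finite set $E$, representing the polymatroid $(E,f)$ with $f(S)=\dim\big(\sum_{x\in S}V_x\big)$. Let $W_1,W_2,W_3$ be three pairwise distinct one-dimensional subspaces of $K^2$ (a linear representation of $U_{2,3}$). Define $g$ on subsets of $E\times\{1,2,3\}$ by $g(S)=\dim\big(\sum_{(x,i)\in S}V_x\otimes W_i\big)$, the sum taken inside $V\otimes_K K^2$. Then $(E\times\{1,2,3\},g)$ is a tensor product of $(E,f)$ and $U_{2,3}$, and for all $A_1,A_2,A_3\subseteq E$, writing $U_i=\sum_{x\in A_i}V_x$, \[ g\big((A_1\times\{1\})\cup(A_2\times\{2\})\cup(A_3\times\{3\})\big)=f(A_1)+f(A_2)+f(A_3)-\dim(U_1\cap U_2\cap U_3). \]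
   Context: A polymatroid $(E,f)$ consists of a finite ground set $E$ and a function $f\colon 2^E\to\mathbb{R}$ with $f(\emptyset)=0$ that is monotone and submodular. The uniform matroid $U_{2,3}$ is the polymatroid on $\{1,2,3\}$ with rank function $r(T)=\min\{|T|,2\}$. A tensor product of polymatroids $(E_1,f_1)$ and $(E_2,f_2)$ is a polymatroid $(E_1\times E_2,g)$ such that $g(S\times T)=f_1(S)f_2(T)$ for all $S\subseteq E_1$, $T\subseteq E_2$. *)

(* Defs.v *)
From HB Require Import structures.
From mathcomp Require Import all_boot all_order all_algebra.
Set Implicit Arguments. Unset Strict Implicit. Unset Printing Implicit Defensive.
Import Order.TTheory GRing.Theory Num.Theory.
Local Open Scope ring_scope.

Definition polymatroid (R : numDomainType) (T : finType) (f : {set T} -> R) : Prop :=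
  [/\ f set0 = 0,
      (forall A B : {set T}, A \subset B -> f A <= f B) &
      (forall A B : {set T}, f (A :|: B) + f (A :&: B) <= f A + f B)].

Definition is_tensor_product (R : numDomainType) (T1 T2 : finType)
    (f1 : {set T1} -> R) (f2 : {set T2} -> R) (g : {set T1 * T2} -> R) : Prop :=
  polymatroid g /\ forall (S : {set T1}) (T : {set T2}), g (setX S T) = f1 S * f2 T.

Definition rank_U23 (T : {set 'I_3}) : nat := minn #|T| 2.

(* The tensor product V ⊗_K K^2 is identified with V * V via
   v ⊗ (a, b) |-> (a v, b v).  Vectors of K^2 are row vectors 'rV[K]_2. *)
Definition tens (K : fieldType) (vT : vectType K) (v : vT) (w : 'rV[K]_2) : vT * vT :=
  (w ord0 ord0 *: v, w ord0 ord_max *: v).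

Definition tensor_sp (K : fieldType) (vT : vectType K)
    (U : {vspace vT}) (W : {vspace 'rV[K]_2}) : {vspace vT * vT} :=
  (<<[seq tens u w | u <- vbasis U, w <- vbasis W]>>)%VS.

(* Main.v *)
Require Import Defs.
From HB Require Import structures.
From mathcomp Require Import all_boot all_order all_algebra.
From mathcomp Require Import ring zify.
Import Order.TTheory GRing.Theory Num.Theory.
Local Open Scope ring_scope.
Set Implicit Arguments. Unset Strict Implicit.

Section S.
Variables (K : fieldType) (vT : vectType K).
Definition tfun (w : 'rV[K]_2) (v : vT) : vT * vT := tens v w.
Lemma tfun_linear w : linear (tfun w).
Proof. move=> k x y; rewrite /tfun /tens /=. apply: injective_projections => /=; by rewrite scalerDr !scalerA mulrC. Qed.
HB.instance Definition _ w := GRing.isLinear.Build K vT (vT*vT)%type *:%R (tfun w) (tfun_linear w).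
Definition phi w : 'Hom(vT, (vT*vT)%type) := linfun (tfun w).
Definition ca (w : 'rV[K]_2) := w ord0 ord0.
Definition cb (w : 'rV[K]_2) := w ord0 ord_max.
Definition det (w1 w2 : 'rV[K]_2) := ca w1 * cb w2 - ca w2 * cb w1.
Lemma phiE w v : phi w v = (ca w *: v, cb w *: v).
Proof. by rewrite lfunE. Qed.

Lemma elimx (x y z1 z2 : vT) a1 b1 a2 b2 : a1*:x + a2*:y = z1 -> b1*:x + b2*:y = z2 ->
  (a1*b2 - a2*b1) *: x = b2 *: z1 - a2 *: z2.
Proof.
move=> <- <-; rewrite !scalerDr !scalerA scalerBl opprD addrACA [b2*a2]mulrC subrr addr0.
by rewrite [b2*a1]mulrC.
Qed.

Lemma elimy (x y z1 z2 : vT) a1 b1 a2 b2 : a1*:x + a2*:y = z1 -> b1*:x + b2*:y = z2 ->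
  (a1*b2 - a2*b1) *: y = a1 *: z2 - b1 *: z1.
Proof.
move=> <- <-; rewrite !scalerDr !scalerA scalerBl opprD addrACA [b1*a1]mulrC subrr add0r.
by rewrite [b1*a2]mulrC.
Qed.

Lemma phi_sum0 w1 w2 x y : det w1 w2 != 0 -> phi w1 x + phi w2 y = 0 -> x = 0 /\ y = 0.
Proof.
move=> hd; rewrite !phiE => /(congr1 (fun p => (p.1, p.2))) /= [e1 e2].
have := elimx e1 e2; have := elimy e1 e2; rewrite !scaler0 subrr => /eqP; rewrite scaler_eq0 (negPf hd) /= => /eqP ->.
by move/eqP; rewrite scaler_eq0 (negPf hd) /= => /eqP ->.
Qed.

Lemma phi_ker w U : w != 0 -> (U :&: lker (phi w))%VS = 0%VS.
Proof.
move=> hw; apply/eqP; rewrite -subv0; apply/subvP => x /memv_capP [_].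
rewrite memv_ker phiE memv0 => /eqP /(congr1 (fun p => (p.1, p.2))) /= [e1 e2].
apply/negPn/negP => hx; move: hw; rewrite -[w]/(w) .
suff -> : w = 0 by rewrite eqxx.
apply/rowP => j; rewrite mxE.
have [->|->] : j = ord0 \/ j = ord_max.
  by case: j => [[|[|//]]] ? ; [left|right]; apply: val_inj.
- by move/eqP: e1; rewrite scaler_eq0 (negPf hx) orbF => /eqP.
- by move/eqP: e2; rewrite scaler_eq0 (negPf hx) orbF => /eqP.
Qed.

Lemma dim_phi w U : w != 0 -> \dim (phi w @: U) = \dim U.
Proof. by move=> hw; apply: limg_dim_eq; apply: phi_ker. Qed.
Lemma core w1 w2 w3 (U1 U2 U3 : {vspace vT}) :
  det w1 w2 != 0 -> det w3 w2 != 0 -> det w1 w3 != 0 ->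
  w1 != 0 -> w2 != 0 -> w3 != 0 ->
  (\dim (phi w1 @: U1 + phi w2 @: U2 + phi w3 @: U3) + \dim (U1 :&: U2 :&: U3)
   = \dim U1 + \dim U2 + \dim U3)%N.
Proof.
move=> h12 h32 h13 nz1 nz2 nz3.
have c12 : (phi w1 @: U1 :&: phi w2 @: U2)%VS = 0%VS.
  apply/eqP; rewrite -subv0; apply/subvP => y /memv_capP [/memv_imgP [u1 _ ->] /memv_imgP [u2 _ e]].
  have := phi_sum0 (x:=u1) (y:=- u2) h12; rewrite raddfN /= -e subrr => /(_ erefl) [-> _].
  by rewrite linear0 memv0.
have c3 : ((phi w1 @: U1 + phi w2 @: U2) :&: phi w3 @: U3)%VS = (phi w3 @: (U1 :&: U2 :&: U3))%VS.
  apply/subv_anti/andP; split; apply/subvP => y.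
  - move/memv_capP => [/memv_addP [y1 /memv_imgP [u1 hu1 ->] [y2 /memv_imgP [u2 hu2 ->] ->]] /memv_imgP [u3 hu3 e]].
    rewrite e; apply: memv_img.
    move: e; rewrite !phiE => /(congr1 (fun p => (p.1,p.2))) /= [e1 e2].
    have ex := elimx e1 e2; have ey := elimy e1 e2.
    rewrite !scalerA -scalerBl in ex ey.
    have d1 : cb w2 * ca w3 - ca w2 * cb w3 = det w3 w2 by rewrite /det mulrC.
    rewrite d1 in ex.
    have d2 : ca w1 * cb w3 - cb w1 * ca w3 = det w1 w3 by rewrite /det [cb w1 * _]mulrC.
    rewrite -scalerBl d2 in ey.
    have e3 : forall d (v : vT), d != 0 -> v = d^-1 *: (d *: v).
      by move=> d v hd; rewrite scalerA mulVf // scale1r.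
    apply/memv_capP; split=> //; apply/memv_capP; split.
    + by rewrite (e3 _ u3 h32) -ex; apply: memvZ; apply: memvZ.
    + by rewrite (e3 _ u3 h13) -ey; apply: memvZ; apply: memvZ.
  - move/memv_imgP => [u /memv_capP [/memv_capP [hu1 hu2] hu3] ->].
    apply/memv_capP; split; last by apply: memv_img.
    apply/memv_addP; exists (phi w1 ((det w3 w2 / det w1 w2) *: u)); first by apply: memv_img; apply: memvZ.
    exists (phi w2 ((det w1 w3 / det w1 w2) *: u)); first by apply: memv_img; apply: memvZ.
    move: h12; rewrite !phiE /det /ca /cb => h12.
    apply: injective_projections => /=; rewrite !scalerA -scalerDl; congr (_ *: u); field; done.
have := dimv_sum_cap (phi w1 @: U1 + phi w2 @: U2) (phi w3 @: U3).
rewrite c3 !dim_phi // => ->.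
have := dimv_sum_cap (phi w1 @: U1) (phi w2 @: U2).
by rewrite c12 dimv0 addn0 !dim_phi // => ->.
Qed.
End S.

Section T.
Variables (K : fieldType) (vT : vectType K).

Definition wof (W : {vspace 'rV[K]_2}) := (vbasis W)`_0.

Lemma vbasis1 W : \dim W = 1%N -> (vbasis W : seq _) = [:: wof W].
Proof.
rewrite /wof => h; have : size (vbasis W) = 1%N by rewrite size_tuple.
by case: (tval (vbasis W)) => [|a [|]].
Qed.

Lemma W_line W : \dim W = 1%N -> W = <[wof W]>%VS.
Proof.
move=> h; have := vbasisP W; rewrite vbasis1 // => /span_basis e.
by rewrite -{1}e span_seq1.
Qed.

Lemma wof_nz W : \dim W = 1%N -> wof W != 0.
Proof. by move=> h; have := basis_free (vbasisP W); rewrite vbasis1 // seq1_free. Qed.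

Lemma tensor_phi (U : {vspace vT}) W : \dim W = 1%N -> tensor_sp U W = (phi vT (wof W) @: U)%VS.
Proof.
move=> h; rewrite /tensor_sp vbasis1 //.
transitivity (phi vT (wof W) @: <<vbasis U>>)%VS; last by rewrite (span_basis (vbasisP U)).
rewrite limg_span; congr (<< _ >>)%VS.
by elim: (tval (vbasis U)) => //= u s ->; rewrite lfunE.
Qed.

Lemma rv2 (u v : 'rV[K]_2) : u ord0 ord0 = v ord0 ord0 -> u ord0 ord_max = v ord0 ord_max -> u = v.
Proof.
move=> e0 e1; apply/rowP => j.
have [->|->] : j = ord0 \/ j = ord_max.
  by case: j => [[|[|//]]] ? ; [left|right]; apply: val_inj.
- exact: e0.
- exact: e1.
Qed.

Lemma collinear (w1 w2 : 'rV[K]_2) : w1 != 0 -> det w1 w2 = 0 -> exists k, w2 = k *: w1.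
Proof.
move=> nz hd; rewrite /det /ca /cb in hd.
case: (eqVneq (w1 ord0 ord0) 0) => h0.
- have hb : w1 ord0 ord_max != 0.
    apply: contra nz => /eqP hb; apply/eqP; apply: rv2; by rewrite mxE.
  exists (w2 ord0 ord_max / w1 ord0 ord_max); apply: rv2; rewrite mxE.
  + rewrite h0 mulr0; move/eqP: hd; rewrite h0 mul0r sub0r oppr_eq0 mulf_eq0 (negPf hb) orbF.
    by move/eqP.
  + by rewrite divfK.
- exists (w2 ord0 ord0 / w1 ord0 ord0); apply: rv2; rewrite mxE.
  + by rewrite divfK.
  + have e : w1 ord0 ord0 * w2 ord0 ord_max = w2 ord0 ord0 * w1 ord0 ord_max.
      by apply/eqP; rewrite -subr_eq0 hd.
    apply: (mulfI h0); rewrite e; field; done.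
Qed.

Lemma det_nz (W1 W2 : {vspace 'rV[K]_2}) : \dim W1 = 1%N -> \dim W2 = 1%N -> W1 != W2 ->
  det (wof W1) (wof W2) != 0.
Proof.
move=> h1 h2 hne; apply/negP => /eqP hd; apply/negP: hne; apply/negPn/eqP.
suff s : (W2 <= W1)%VS.
  by move: (dimv_leqif_eq s) => [_]; rewrite h1 h2 eqxx => /esym/eqP ->.
have [k ek] := collinear (wof_nz h1) hd.
rewrite (W_line h1) {1}(W_line h2) -memvE; apply/vlineP; by exists k.
Qed.
End T.

Lemma ord3 (i : 'I_3) : i = inord 0 \/ i = inord 1 \/ i = inord 2.
Proof.
case: i => [[|[|[|//]]] Hi]; [left|right;left|right;right]; apply: val_inj; by rewrite /= inordK.
Qed.

Lemma n01 : ((inord 0 : 'I_3) == inord 1) = false.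
Proof. by rewrite -(inj_eq val_inj) /= !inordK. Qed.
Lemma n02 : ((inord 0 : 'I_3) == inord 2) = false.
Proof. by rewrite -(inj_eq val_inj) /= !inordK. Qed.
Lemma n12 : ((inord 1 : 'I_3) == inord 2) = false.
Proof. by rewrite -(inj_eq val_inj) /= !inordK. Qed.
Lemma n10 : ((inord 1 : 'I_3) == inord 0) = false.
Proof. by rewrite eq_sym n01. Qed.
Lemma n20 : ((inord 2 : 'I_3) == inord 0) = false.
Proof. by rewrite eq_sym n02. Qed.
Lemma n21 : ((inord 2 : 'I_3) == inord 1) = false.
Proof. by rewrite eq_sym n12. Qed.

Lemma sub3 (K : fieldType) (vT : vectType K) (X A B C : {vspace vT}) : ((X <= A) || (X <= B) || (X <= C))%VS -> (X <= A + B + C)%VS.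
Proof.
case/orP => [/orP [h|h]|h].
- by apply: subv_trans (addvSl _ _); apply: subv_trans (addvSl _ _).
- by apply: subv_trans (addvSl _ _); apply: subv_trans (addvSr _ _).
- by apply: subv_trans (addvSr _ _).
Qed.

Section U.
Variables (K : fieldType) (vT : vectType K).

Lemma decomp (E : finType) (V : E -> {vspace vT}) (w : 'I_3 -> 'rV[K]_2) (S : {set E * 'I_3})
  (B0 B1 B2 : {set E}) :
  (forall x, ((x, inord 0) \in S) = (x \in B0)) ->
  (forall x, ((x, inord 1) \in S) = (x \in B1)) ->
  (forall x, ((x, inord 2) \in S) = (x \in B2)) ->
  (\sum_(p in S) phi vT (w p.2) @: V p.1)%VS =
  (phi vT (w (inord 0)) @: (\sum_(x in B0) V x) + phi vT (w (inord 1)) @: (\sum_(x in B1) V x)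
   + phi vT (w (inord 2)) @: (\sum_(x in B2) V x))%VS.
Proof.
move=> h0 h1 h2; apply/subv_anti/andP; split.
- apply/subv_sumP => [[x i]] /= hp. apply: sub3.
  have [ei|[ei|ei]] := ord3 i; subst i.
  + apply/orP; left; apply/orP; left; apply: limgS; apply: (sumv_sup x); [by rewrite -h0 | exact: subvv].
  + apply/orP; left; apply/orP; right; apply: limgS; apply: (sumv_sup x); [by rewrite -h1 | exact: subvv].
  + apply/orP; right; apply: limgS; apply: (sumv_sup x); [by rewrite -h2 | exact: subvv].
- rewrite !subv_add !limg_sum; apply/andP; split; first (apply/andP; split).
  + apply/subv_sumP => x hx; apply: (sumv_sup (x, inord 0)); [by rewrite h0 | exact: subvv].
  + apply/subv_sumP => x hx; apply: (sumv_sup (x, inord 1)); [by rewrite h1 | exact: subvv].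
  + apply/subv_sumP => x hx; apply: (sumv_sup (x, inord 2)); [by rewrite h2 | exact: subvv].
Qed.

Lemma dim_sum_poly (R : numDomainType) (T : finType) (F : T -> {vspace vT}) :
  polymatroid (fun S : {set T} => (\dim (\sum_(p in S) F p)%VS)%:R : R).
Proof.
split.
- by rewrite big_set0 dimv0.
- move=> A B sAB; rewrite ler_nat; apply: dimvS; apply/subv_sumP => p pA.
  apply: (sumv_sup p); [exact: (subsetP sAB) | exact: subvv].
- move=> A B; rewrite -!natrD ler_nat.
  have sU : (\sum_(p in A :|: B) F p <= (\sum_(p in A) F p) + (\sum_(p in B) F p))%VS.
    apply/subv_sumP => p; rewrite in_setU => /orP [pA|pB].
    + apply: subv_trans (addvSl _ _); apply: (sumv_sup p); [exact: pA | exact: subvv].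
    + apply: subv_trans (addvSr _ _); apply: (sumv_sup p); [exact: pB | exact: subvv].
  have sI : (\sum_(p in (A :&: B)%SET) F p <= (\sum_(p in A) F p) :&: (\sum_(p in B) F p))%VS.
    apply/subv_sumP => p; rewrite in_setI => /andP [pA pB]; rewrite subv_cap; apply/andP; split.
    + apply: (sumv_sup p); [exact: pA | exact: subvv].
    + apply: (sumv_sup p); [exact: pB | exact: subvv].
  rewrite -[X in (_ <= X)%N]dimv_sum_cap; apply: leq_add; exact: dimvS.
Qed.
End U.

Lemma card3 (T : {set 'I_3}) :
  #|T| = ((inord 0 \in T) + (inord 1 \in T) + (inord 2 \in T))%N.
Proof.
rewrite -sum1_card big_mkcond /= !big_ord_recl big_ord0 /=.
have -> : (lift ord0 (lift ord0 ord0) : 'I_3) = inord 2 by apply: val_inj; rewrite /= inordK.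
have -> : (lift ord0 ord0 : 'I_3) = inord 1 by apply: val_inj; rewrite /= inordK.
have -> : (ord0 : 'I_3) = inord 0 by apply: val_inj; rewrite /= inordK.
by case: (inord 0 \in T); case: (inord 1 \in T); case: (inord 2 \in T).
Qed.

Theorem proposition4p1 (K : fieldType) (vT : vectType K) (E : finType)
    (V : E -> {vspace vT}) (W : 'I_3 -> {vspace 'rV[K]_2}) (R : realFieldType) :
  (forall i, \dim (W i) = 1%N) ->
  (forall i j, W i = W j -> i = j) ->
  let f := fun S : {set E} => \dim (\sum_(x in S) V x)%VS in
  let g := fun S : {set E * 'I_3} =>
             \dim (\sum_(p in S) tensor_sp (V p.1) (W p.2))%VS in
  is_tensor_product (fun S => (f S)%:R : R) (fun T => (rank_U23 T)%:R : R)
                    (fun S => (g S)%:R : R)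
  /\ forall A1 A2 A3 : {set E},
       let U1 := (\sum_(x in A1) V x)%VS in
       let U2 := (\sum_(x in A2) V x)%VS in
       let U3 := (\sum_(x in A3) V x)%VS in
       (g (setX A1 [set (inord 0 : 'I_3)] :|: setX A2 [set (inord 1 : 'I_3)]
             :|: setX A3 [set (inord 2 : 'I_3)]))%:Z
       = (f A1)%:Z + (f A2)%:Z + (f A3)%:Z - (\dim (U1 :&: U2 :&: U3)%VS)%:Z.
Proof.
move=> hdim hinj f g.
pose w := fun i => wof (W i).
have gE : forall S, g S = \dim (\sum_(p in S) phi vT (w p.2) @: V p.1)%VS.
  move=> S; rewrite /g; congr (\dim _); apply: eq_bigr => p _; exact: tensor_phi.
have hdet : forall i j : 'I_3, (i == j) = false -> det (w i) (w j) != 0.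
  move=> i j hij; apply: det_nz => //; apply/eqP => e.
  by move: hij; rewrite (hinj _ _ e) eqxx.
have hnz : forall i, w i != 0 by move=> i; exact: wof_nz.
have key : forall (S : {set E * 'I_3}) (B0 B1 B2 : {set E}),
  (forall x, ((x, inord 0) \in S) = (x \in B0)) ->
  (forall x, ((x, inord 1) \in S) = (x \in B1)) ->
  (forall x, ((x, inord 2) \in S) = (x \in B2)) ->
  (g S + \dim ((\sum_(x in B0) V x) :&: (\sum_(x in B1) V x) :&: (\sum_(x in B2) V x))%VS
   = f B0 + f B1 + f B2)%N.
  move=> S B0 B1 B2 h0 h1 h2; rewrite gE (decomp _ _ h0 h1 h2).
  by apply: core; try apply: hdet; rewrite ?n01 ?n02 ?n12 ?n10 ?n20 ?n21.
split.
- split; first exact: dim_sum_poly.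
  move=> S T.
  have := key (setX S T) (if inord 0 \in T then S else set0)
    (if inord 1 \in T then S else set0) (if inord 2 \in T then S else set0).
  have hx : forall i x, ((x, i) \in setX S T) = (x \in if i \in T then S else set0).
    by move=> i x; rewrite in_setX /=; case: (i \in T); rewrite ?in_set0 ?andbT ?andbF.
  move=> /(_ (hx _) (hx _) (hx _)).
  rewrite /rank_U23 card3 -natrM /f.
  case: (inord 0 \in T); case: (inord 1 \in T); case: (inord 2 \in T);
    rewrite ?big_set0 ?capv0 ?cap0v ?capvv ?dimv0 => e; congr (_%:R); lia.
- move=> A1 A2 A3 U1 U2 U3.
  set S := (_ :|: _ :|: _).
  have e : (g S + \dim (U1 :&: U2 :&: U3)%VS = f A1 + f A2 + f A3)%N.
    by apply: key => x; rewrite /S !in_setU !in_setX !in_set1 /= ?eqxx ?n01 ?n02 ?n12 ?n10 ?n20 ?n21 ?andbT ?andbF ?orbF ?orFb.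
  lia.
Qed.
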